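(* Let $(\mathbf F,\mathbf A)$ be an enriched cut-free Gentzen $ru$-frame with $\mathbf F=(G,T,N,K)$. For all $a,b\in A$ and closed sets $X,Y$ of $\mathbf F$: (1) if $1^{\mathbf A}$ is defined, then $1^{\mathbf A}\in\gamma_N(\{\varepsilon\})\subseteq\{1^{\mathbf A}\}^{\lhd}$; (2) for $\bullet\in\{\wedge,\vee,\cdot,\backslash,/\}$: if $a\bullet^{\mathbf A}b$ is defined, $a\in X\subseteq\{a\}^{\lhd}$ and $b\in Y\subseteq\{b\}^{\lhd}$, then $a\bullet^{\mathbf A}b\in X\bullet^{\mathbf F^+}Y\subseteq\{a\bullet^{\mathbf A}b\}^{\lhd}$; (3) if $!^{\mathbf A}a$ is defined and $a\in X\subseteq\{a\}^{\lhd}$, then $!^{\mathbf A}a\in\, !X\subseteq\{!^{\mathbf A}a\}^{\lhd}$; (4) if $(\mathbf F,\mathbf A)$ is an enriched cut-free Gentzen $ruz$-frame and $0^{\mathbf A}$ is defined, then $0^{\mathbf A}\in\{\epsilon\}^{\lhd}\subseteq\{0^{\mathbf A}\}^{\lhd}$; (5) if $(\mathbf F,\mathbf A)$ is moreover an enriched Gentzen frame (i.e. satisfies [cut]), then the map $a\mapsto\{a\}^{\lhd}$ is a homomorphism of partial algebras from $\mathbf A$ to $\mathbf F^+$ (whenever $f^{\mathbf A}(\vec a)$ is defined, its image equals $f^{\mathbf F^+}$ applied to the images); (6) if $N$ is antisymmetric on $A$ ($aNb$ and $bNa$ imply $a=b$ for $a,b\in A$), then the map $a\mapsto\{a\}^{\lhd}$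 is injective.
   Context: Enriched $ru$-frame: $\mathbf F=(G,T,N,K)$ with $(G,\cdot,\varepsilon)$ a unital groupoid (not necessarily associative), $T$ a set, $N\subseteq G\times T$ nuclear (for all $x,y\in G,z\in T$ there are $x\backslash\!\!\backslash z, z/\!\!/y\in T$ with $x\cdot y\,N\,z\iff y\,N\,x\backslash\!\!\backslash z\iff x\,N\,z/\!\!/y$), $K$ a sub-unital-groupoid of $G$; an enriched $ruz$-frame additionally has $\epsilon\in T$. $X^{\rhd}=\{t\in T\mid\forall x\in X\,xNt\}$, $Y^{\lhd}=\{g\in G\mid\forall y\in Y\,gNy\}$, $\gamma_N(X)=X^{\rhd\lhd}$; closed sets are those with $\gamma_N(X)=X$. $\mathbf F^+$: universe the closed sets, $X\wedge Y=X\cap Y$, $X\vee Y=\gamma_N(X\cup Y)$, $X\cdot Y=\gamma_N(X\circ Y)$ with $X\circ Y=\{x\cdot y\mid x\in X,y\in Y\}$, $X\backslash Y=\{z\mid X\circ\{z\}\subseteq Y\}$, $Y/X=\{z\mid \{z\}\circ X\subseteq Y\}$, $!X=\gamma_N(X\cap K)$, unit $\gamma_N(\{\varepsilon\})$, and in the $ruz$ case zero $\{\epsilon\}^{\lhd}$. Enriched cut-free Gentzen $ru$-frame: a pair $(\mathbf F,\mathbf A)$ with $\mathbf F$ an enriched $ru$-frame and $\mathbf A$ a partial algebra in $\{\wedge,\vee,\cdot,\backslash,/,!,1\}$, together with injections of $A$ into $G$ and into $T$ and of $A^!=\{!^{\mathbf A}a\mid a\in\operatorname{dom}!^{\mathbf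 A}\}$ into $K$ (elements of $A$ are identified with their images; in particular $\{a\}^{\lhd}$ uses $a$ as an element of $T$), such that for all $x,y\in G$, $z\in T$, $a,a_1,a_2,b\in A$, $k\in K$ (whenever the displayed operations of $\mathbf A$ are defined): $\varepsilon\,N\,1^{\mathbf A}$; $a\,N\,a$; $\varepsilon Nz\Rightarrow 1^{\mathbf A}Nz$; $a\cdot b\,N\,z\Rightarrow a\cdot^{\mathbf A}b\,N\,z$; $xNa,\,yNb\Rightarrow x\cdot y\,N\,a\cdot^{\mathbf A}b$; $xNa,\,bNz\Rightarrow x\cdot(a\backslash^{\mathbf A}b)\,N\,z$; $a\cdot x\,N\,b\Rightarrow x\,N\,a\backslash^{\mathbf A}b$; $xNa,\,bNz\Rightarrow (b/^{\mathbf A}a)\cdot x\,N\,z$; $x\cdot a\,N\,b\Rightarrow x\,N\,b/^{\mathbf A}a$; $a_iNz\Rightarrow a_1\wedge^{\mathbf A}a_2\,N\,z$; $xNa,\,xNb\Rightarrow x\,N\,a\wedge^{\mathbf A}b$; $aNz,\,bNz\Rightarrow a\vee^{\mathbf A}b\,N\,z$; $xNa_i\Rightarrow x\,N\,a_1\vee^{\mathbf A}a_2$; $aNz\Rightarrow !^{\mathbf A}a\,N\,z$; $kNa\Rightarrow k\,N\,!^{\mathbf A}a$. An enriched cut-free Gentzen $ruz$-frame uses an enriched $ruz$-frame and a partial algebra with additional constant $0$, and also requires $0^{\mathbf A}N\epsilon$ and $xN\epsilon\Rightarrow xN0^{\mathbf A}$. An enriched Gentzen frame additionally satisfies [cut]: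 $xNa$ and $aNz$ imply $xNz$ (for $x\in G$, $a\in A$, $z\in T$). *)

(* Defs.v *)
Set Implicit Arguments.

Record ruFrame := {
  G : Type;
  T : Type;
  gmul : G -> G -> G;
  geps : G;
  N : G -> T -> Prop;
  K : G -> Prop;
  ldivT : G -> T -> T;
  rdivT : T -> G -> T;
  unit_l : forall x, gmul geps x = x;
  unit_r : forall x, gmul x geps = x;
  nuclear_l : forall x y z, N (gmul x y) z <-> N y (ldivT x z);
  nuclear_r : forall x y z, N (gmul x y) z <-> N x (rdivT z y);
  K_eps : K geps;
  K_mul : forall x y, K x -> K y -> K (gmul x y)
}.

Arguments gmul {r} _ _.
Arguments geps {r}.
Arguments N {r} _ _.
Arguments K {r} _.

Section Galois.
Variable F : ruFrame.

Definition subset {U : Type} (X Y : U -> Prop) : Prop := forall u, X u -> Y u.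

Definition rhd (X : G F -> Prop) : T F -> Prop := fun t => forall x, X x -> N x t.
Definition lhd (Y : T F -> Prop) : G F -> Prop := fun g => forall y, Y y -> N g y.
Definition gammaN (X : G F -> Prop) : G F -> Prop := lhd (rhd X).
Definition closed (X : G F -> Prop) : Prop := gammaN X = X.

Definition meetF (X Y : G F -> Prop) : G F -> Prop := fun x => X x /\ Y x.
Definition joinF (X Y : G F -> Prop) : G F -> Prop := gammaN (fun x => X x \/ Y x).
Definition circ (X Y : G F -> Prop) : G F -> Prop :=
  fun z => exists x y, X x /\ Y y /\ z = gmul x y.
Definition mulF (X Y : G F -> Prop) : G F -> Prop := gammaN (circ X Y).
Definition ldivF (X Y : G F -> Prop) : G F -> Prop :=
  fun z => forall x, X x -> Y (gmul x z).
(** Y / X = {z | {z} o X subset Y}; written rdivF Y X *)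
Definition rdivF (Y X : G F -> Prop) : G F -> Prop :=
  fun z => forall x, X x -> Y (gmul z x).
Definition bangF (X : G F -> Prop) : G F -> Prop := gammaN (fun x => X x /\ K x).
Definition oneF : G F -> Prop := gammaN (fun x => x = geps).
Definition zeroF (ez : T F) : G F -> Prop := lhd (fun t => t = ez).

End Galois.

Record GentzenRU (F : ruFrame) := {
  A : Type;
  meetA : A -> A -> option A;
  joinA : A -> A -> option A;
  mulA  : A -> A -> option A;
  ldivA : A -> A -> option A;
  rdivA : A -> A -> option A;       (* rdivA b a = b / a *)
  bangA : A -> option A;
  oneA  : option A;
  inG : A -> G F;
  inT : A -> T F;
  inG_inj : forall a b, inG a = inG b -> a = b;
  inT_inj : forall a b, inT a = inT b -> a = b;
  bang_K : forall a c, bangA a = Some c -> K (inG c);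
  g_one1 : forall o, oneA = Some o -> N geps (inT o);
  g_id : forall a, N (inG a) (inT a);
  g_one2 : forall o z, oneA = Some o -> N geps z -> N (inG o) z;
  g_mulL : forall a b c z, mulA a b = Some c ->
      N (gmul (inG a) (inG b)) z -> N (inG c) z;
  g_mulR : forall a b c x y, mulA a b = Some c ->
      N x (inT a) -> N y (inT b) -> N (gmul x y) (inT c);
  g_ldivL : forall a b c x z, ldivA a b = Some c ->
      N x (inT a) -> N (inG b) z -> N (gmul x (inG c)) z;
  g_ldivR : forall a b c x, ldivA a b = Some c ->
      N (gmul (inG a) x) (inT b) -> N x (inT c);
  g_rdivL : forall a b c x z, rdivA b a = Some c ->
      N x (inT a) -> N (inG b) z -> N (gmul (inG c) x) z;
  g_rdivR : forall a b c x, rdivA b a = Some c ->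
      N (gmul x (inG a)) (inT b) -> N x (inT c);
  g_meetL1 : forall a1 a2 c z, meetA a1 a2 = Some c -> N (inG a1) z -> N (inG c) z;
  g_meetL2 : forall a1 a2 c z, meetA a1 a2 = Some c -> N (inG a2) z -> N (inG c) z;
  g_meetR : forall a b c x, meetA a b = Some c ->
      N x (inT a) -> N x (inT b) -> N x (inT c);
  g_joinL : forall a b c z, joinA a b = Some c ->
      N (inG a) z -> N (inG b) z -> N (inG c) z;
  g_joinR1 : forall a1 a2 c x, joinA a1 a2 = Some c -> N x (inT a1) -> N x (inT c);
  g_joinR2 : forall a1 a2 c x, joinA a1 a2 = Some c -> N x (inT a2) -> N x (inT c);
  g_bangL : forall a c z, bangA a = Some c -> N (inG a) z -> N (inG c) z;
  g_bangR : forall a c k, bangA a = Some c -> K k -> N k (inT a) -> N k (inT c)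
}.

Arguments A {F} _.
Arguments meetA {F} _ _ _.
Arguments joinA {F} _ _ _.
Arguments mulA {F} _ _ _.
Arguments ldivA {F} _ _ _.
Arguments rdivA {F} _ _ _.
Arguments bangA {F} _ _.
Arguments oneA {F} _.
Arguments inG {F} _ _.
Arguments inT {F} _ _.

(** Extra conditions making (F,A) an enriched cut-free Gentzen ruz-frame:
    a distinguished ez in T (the epsilon of the ruz-frame) and a partial
    constant z0 (the 0 of A). *)
Definition ruzCond {F : ruFrame} (P : GentzenRU F) (ez : T F) (z0 : option (A P)) : Prop :=
  forall o, z0 = Some o -> N (inG P o) ez /\ (forall x, N x ez -> N x (inT P o)).

Definition cutCond {F : ruFrame} (P : GentzenRU F) : Prop :=
  forall (x : G F) (a : A P) (z : T F), N x (inT P a) -> N (inG P a) z -> N x z.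

Definition img {F : ruFrame} (P : GentzenRU F) (a : A P) : G F -> Prop :=
  @lhd F (fun t => t = inT P a).

Arguments rhd {F} _ _.
Arguments lhd {F} _ _.
Arguments gammaN {F} _ _.
Arguments closed {F} _.
Arguments meetF {F} _ _ _.
Arguments joinF {F} _ _ _.
Arguments circ {F} _ _ _.
Arguments mulF {F} _ _ _.
Arguments ldivF {F} _ _ _.
Arguments rdivF {F} _ _ _.
Arguments bangF {F} _ _.

(* Main.v *)
Require Import Defs.
From Stdlib Require Import FunctionalExtensionality PropExtensionality.

Section S.
Variable F : ruFrame.
Variable P : GentzenRU F.

Lemma cl_intro (X : G F -> Prop) g : closed X ->
  (forall t, (forall x, X x -> N x t) -> N g t) -> X g.
Proof. intros H H0. rewrite <- H. exact H0. Qed.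

Lemma cl_lhd (W : T F -> Prop) : closed (lhd W).
Proof.
  unfold closed, gammaN. apply functional_extensionality; intro g.
  apply propositional_extensionality; split; unfold lhd, rhd; intros H.
  - intros y Hy. apply H. intros x Hx. apply Hx, Hy.
  - intros y Hy. apply Hy, H.
Qed.

Lemma img_sub_lhd (cut : cutCond P) (W : T F -> Prop) c :
  lhd W (inG P c) -> subset (img P c) (lhd W).
Proof.
  intros H g Hg w Hw. unfold img, lhd in Hg. eapply cut. apply Hg; reflexivity. apply H, Hw.
Qed.

Lemma peq (X Y : G F -> Prop) : subset X Y -> subset Y X -> X = Y.
Proof. intros; apply functional_extensionality; intro g;
  apply propositional_extensionality; split; auto. Qed.

Lemma imgI a : img P a (inG P a).
Proof. intros y ->. apply g_id. Qed.

Lemma part1 o : oneA P = Some o ->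
     oneF F (inG P o) /\ subset (oneF F) (img P o).
Proof.
  intros Ho; split.
  - intros t Ht. eapply g_one2; [exact Ho|]. apply Ht; reflexivity.
  - intros g Hg y ->. apply Hg. intros x ->. eapply g_one1; exact Ho.
Qed.

Lemma part2 (a b c : A P) (X Y : G F -> Prop) :
     closed X -> closed Y ->
     X (inG P a) -> subset X (img P a) ->
     Y (inG P b) -> subset Y (img P b) ->
     (meetA P a b = Some c -> meetF X Y (inG P c) /\ subset (meetF X Y) (img P c)) /\
     (joinA P a b = Some c -> joinF X Y (inG P c) /\ subset (joinF X Y) (img P c)) /\
     (mulA P a b = Some c -> mulF X Y (inG P c) /\ subset (mulF X Y) (img P c)) /\
     (ldivA P a b = Some c -> ldivF X Y (inG P c) /\ subset (ldivF X Y) (img P c)) /\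
     (rdivA P a b = Some c -> rdivF X Y (inG P c) /\ subset (rdivF X Y) (img P c)).
Proof.
  intros cX cY Xa sX Yb sY.
  assert (sXa : forall x, X x -> N x (inT P a)) by (intros x Hx; apply sX; auto).
  assert (sYb : forall x, Y x -> N x (inT P b)) by (intros x Hx; apply sY; auto).
  repeat split.
  - apply cl_intro; auto. intros t Ht. eapply g_meetL1; eauto.
  - apply cl_intro; auto. intros t Ht. eapply g_meetL2; eauto.
  - intros g [Hx Hy] y ->. eapply g_meetR; eauto.
  - intros t Ht. eapply g_joinL; eauto.
  - intros g Hg y ->. apply Hg. intros x [Hx|Hx].
    + eapply g_joinR1; eauto.
    + eapply g_joinR2; eauto.
  - intros t Ht. eapply g_mulL; eauto. apply Ht. exists (inG P a), (inG P b). auto.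
  - intros g Hg y ->. apply Hg. intros z [x [y [Hx [Hy ->]]]]. eapply g_mulR; eauto.
  - intros x Hx. apply cl_intro; auto. intros t Ht. eapply g_ldivL; eauto.
  - intros z Hz y ->. eapply g_ldivR; eauto.
  - intros x Hx. apply cl_intro; auto. intros t Ht. eapply g_rdivL; eauto.
  - intros z Hz y ->. eapply g_rdivR; eauto.
Qed.

Lemma part3 (a c : A P) (X : G F -> Prop) :
     closed X -> X (inG P a) -> subset X (img P a) ->
     bangA P a = Some c -> bangF X (inG P c) /\ subset (bangF X) (img P c).
Proof.
  intros cX Xa sX Hc. split.
  - intros t Ht. apply Ht. split.
    + apply cl_intro; auto. intros s Hs. eapply g_bangL; eauto.
    + eapply bang_K; eauto.
  - intros g Hg y ->. apply Hg. intros k [Hk Kk]. eapply g_bangR; eauto.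
    apply sX; auto.
Qed.

Lemma part4 (ez : T F) (z0 : option (A P)) (o : A P) :
     ruzCond P ez z0 -> z0 = Some o ->
     zeroF F ez (inG P o) /\ subset (zeroF F ez) (img P o).
Proof.
  intros H Ho. destruct (H o Ho) as [H1 H2]. split.
  - intros y ->. exact H1.
  - intros g Hg y ->. apply H2. apply Hg. reflexivity.
Qed.

End S.

Theorem mainTheorem11 (F : ruFrame) (P : GentzenRU F) :
  (* (1) *)
  (forall o, oneA P = Some o ->
     oneF F (inG P o) /\ subset (oneF F) (img P o)) /\
  (* (2) *)
  (forall (a b c : A P) (X Y : G F -> Prop),
     closed X -> closed Y ->
     X (inG P a) -> subset X (img P a) ->
     Y (inG P b) -> subset Y (img P b) ->
     (meetA P a b = Some c -> meetF X Y (inG P c) /\ subset (meetF X Y) (img P c)) /\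
     (joinA P a b = Some c -> joinF X Y (inG P c) /\ subset (joinF X Y) (img P c)) /\
     (mulA P a b = Some c -> mulF X Y (inG P c) /\ subset (mulF X Y) (img P c)) /\
     (ldivA P a b = Some c -> ldivF X Y (inG P c) /\ subset (ldivF X Y) (img P c)) /\
     (rdivA P a b = Some c -> rdivF X Y (inG P c) /\ subset (rdivF X Y) (img P c))) /\
  (* (3) *)
  (forall (a c : A P) (X : G F -> Prop),
     closed X -> X (inG P a) -> subset X (img P a) ->
     bangA P a = Some c -> bangF X (inG P c) /\ subset (bangF X) (img P c)) /\
  (* (4) *)
  (forall (ez : T F) (z0 : option (A P)) (o : A P),
     ruzCond P ez z0 -> z0 = Some o ->
     zeroF F ez (inG P o) /\ subset (zeroF F ez) (img P o)) /\
  (* (5) *)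
  (cutCond P ->
     (forall o, oneA P = Some o -> img P o = oneF F) /\
     (forall a b c, meetA P a b = Some c -> img P c = meetF (img P a) (img P b)) /\
     (forall a b c, joinA P a b = Some c -> img P c = joinF (img P a) (img P b)) /\
     (forall a b c, mulA P a b = Some c -> img P c = mulF (img P a) (img P b)) /\
     (forall a b c, ldivA P a b = Some c -> img P c = ldivF (img P a) (img P b)) /\
     (forall a b c, rdivA P a b = Some c -> img P c = rdivF (img P a) (img P b)) /\
     (forall a c, bangA P a = Some c -> img P c = bangF (img P a)) /\
     (forall (ez : T F) (z0 : option (A P)) (o : A P),
        ruzCond P ez z0 -> z0 = Some o -> img P o = zeroF F ez)) /\
  (* (6) *)
  ((forall a b : A P, N (inG P a) (inT P b) -> N (inG P b) (inT P a) -> a = b) ->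
     forall a b : A P, img P a = img P b -> a = b).
Proof.
  split; [exact (part1 F P)|].
  split; [exact (part2 F P)|].
  split; [exact (part3 F P)|].
  split; [exact (part4 F P)|].
  split.
  - intros cut.
    pose proof (fun a b c =>
      part2 F P a b c (img P a) (img P b) (cl_lhd F _) (cl_lhd F _)
        (imgI F P a) (fun _ h => h) (imgI F P b) (fun _ h => h)) as P2.
    repeat split.
    + intros o Ho. destruct (part1 F P o Ho) as [H1 H2].
      apply peq; auto. apply img_sub_lhd; auto.
    + intros a b c Hc. destruct (P2 a b c) as [H _]. destruct (H Hc) as [H1 H2].
      apply peq; auto. intros g Hg. split.
      * intros y ->. eapply cut; [apply Hg; reflexivity|].
        eapply g_meetL1; eauto. apply g_id.
      * intros y ->. eapply cut; [apply Hg; reflexivity|].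
        eapply g_meetL2; eauto. apply g_id.
    + intros a b c Hc. destruct (P2 a b c) as [_ [H _]]. destruct (H Hc) as [H1 H2].
      apply peq; auto. apply img_sub_lhd; auto.
    + intros a b c Hc. destruct (P2 a b c) as [_ [_ [H _]]]. destruct (H Hc) as [H1 H2].
      apply peq; auto. apply img_sub_lhd; auto.
    + intros a b c Hc. destruct (P2 a b c) as [_ [_ [_ [H _]]]]. destruct (H Hc) as [H1 H2].
      apply peq; auto. intros g Hg x Hx y ->.
      apply nuclear_l. eapply cut; [apply Hg; reflexivity|].
      apply nuclear_l. eapply g_ldivL; [exact Hc | apply Hx; reflexivity | apply g_id].
    + intros a b c Hc. destruct (P2 a b c) as [_ [_ [_ [_ H]]]]. destruct (H Hc) as [H1 H2].
      apply peq; auto. intros g Hg x Hx y ->.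
      apply nuclear_r. eapply cut; [apply Hg; reflexivity|].
      apply nuclear_r. eapply g_rdivL; [exact Hc | apply Hx; reflexivity | apply g_id].
    + intros a c Hc. destruct (part3 F P a c (img P a) (cl_lhd F _) (imgI F P a) (fun _ h => h) Hc)
        as [H1 H2].
      apply peq; auto. apply img_sub_lhd; auto.
    + intros ez z0 o H Ho. destruct (part4 F P ez z0 o H Ho) as [H1 H2].
      apply peq; auto. apply img_sub_lhd; auto.
  - intros anti a b Hab. apply anti.
    + pose proof (imgI F P a) as H. rewrite Hab in H. apply H; reflexivity.
    + pose proof (imgI F P b) as H. rewrite <- Hab in H. apply H; reflexivity.
Qed.
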